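(* Let $M\ge1$, $h_1,\dots,h_M\ge0$, $P>0$, $\sigma^2>0$ and $\lambda\ge0$. Then the problem $\max_{0\le\alpha_m\le1,\ m=1,\dots,M}\ \log\Big(1+\frac{\sum_{m=1}^M\alpha_m h_mP}{\sigma^2}\Big)+\sum_{m=1}^M\lambda(1-\alpha_m)h_mP$ is equivalent to (in particular, has the same optimal value as) the problem $\max_{0\le\alpha\le1}\ \log\Big(1+\frac{\alpha\sum_{m=1}^M h_mP}{\sigma^2}\Big)+(1-\alpha)\sum_{m=1}^M\lambda h_mP.$
   Context: Here $h_m$ is the channel power gain to receive antenna $m$, $\alpha_m$ is the power splitting ratio at antenna $m$, and $\log$ is the natural logarithm. *)

(* Defs.v *)
From Stdlib Require Import Reals.
Open Scope R_scope.

(* sumM M f = f 0 + f 1 + ... + f (M-1)  (antennas indexed 0..M-1) *)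
Fixpoint sumM (M : nat) (f : nat -> R) : R :=
  match M with
  | O => 0
  | S n => sumM n f + f n
  end.

Definition obj_vec (M : nat) (h : nat -> R) (P sigma2 lambda : R)
  (alpha : nat -> R) : R :=
  ln (1 + sumM M (fun m => alpha m * h m * P) / sigma2)
  + sumM M (fun m => lambda * (1 - alpha m) * h m * P).

Definition obj_scal (M : nat) (h : nat -> R) (P sigma2 lambda : R)
  (a : R) : R :=
  ln (1 + a * sumM M (fun m => h m * P) / sigma2)
  + (1 - a) * sumM M (fun m => lambda * h m * P).

Definition is_max_vec (M : nat) (h : nat -> R) (P sigma2 lambda v : R) : Prop :=
  (exists alpha : nat -> R,
      (forall m, (m < M)%nat -> 0 <= alpha m <= 1) /\
      obj_vec M h P sigma2 lambda alpha = v) /\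
  (forall alpha : nat -> R,
      (forall m, (m < M)%nat -> 0 <= alpha m <= 1) ->
      obj_vec M h P sigma2 lambda alpha <= v).

Definition is_max_scal (M : nat) (h : nat -> R) (P sigma2 lambda v : R) : Prop :=
  (exists a : R, 0 <= a <= 1 /\ obj_scal M h P sigma2 lambda a = v) /\
  (forall a : R, 0 <= a <= 1 -> obj_scal M h P sigma2 lambda a <= v).

(* Main.v *)
Require Import Defs.
From Stdlib Require Import Reals Lra Lia Psatz.
Open Scope R_scope.

Lemma ln_tangent x y : 0 < x -> 0 < y -> ln x - ln y <= x / y - 1.
Proof.
  intros Hx Hy.
  assert (E : exp (ln x - ln y) = x / y).
  { unfold Rminus. rewrite exp_plus, exp_Ropp, !exp_ln by assumption. reflexivity. }
  pose proof (exp_ineq1_le (ln x - ln y)). lra.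
Qed.

Lemma sumM_ext M f g : (forall m, (m < M)%nat -> f m = g m) -> sumM M f = sumM M g.
Proof.
  induction M; simpl; intros H; [reflexivity|].
  rewrite IHM by (intros; apply H; lia). rewrite H by lia. reflexivity.
Qed.

Lemma sumM_lin M f g a b : sumM M (fun m => a * f m + b * g m) = a * sumM M f + b * sumM M g.
Proof. induction M; simpl; [ring|]. rewrite IHM. ring. Qed.

Lemma sumM_bounds M f g : (forall m, (m < M)%nat -> 0 <= f m <= g m) ->
  0 <= sumM M f <= sumM M g.
Proof.
  induction M; simpl; intros H; [lra|].
  assert (A := IHM (fun m Hm => H m ltac:(lia))). assert (B := H M ltac:(lia)). lra.
Qed.

Section G.
Variables (H s l : R).
Hypothesis (HH : 0 <= H) (Hs : 0 < s) (Hl : 0 <= l).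
Definition g (S : R) := ln (1 + S / s) + l * (H - S).

Lemma g_max : exists Ss, 0 <= Ss <= H /\ forall S, 0 <= S <= H -> g S <= g Ss.
Proof.
  assert (key : forall Ss S, 0 <= Ss <= H -> 0 <= S <= H ->
     (S - Ss) * (1 - l * (s + Ss)) <= 0 -> g S <= g Ss).
  { intros Ss S H1 H2 H3. unfold g.
    assert (P1 : 0 < 1 + S / s) by (assert (0 <= S / s) by (unfold Rdiv; apply Rmult_le_pos; [lra| left; apply Rinv_0_lt_compat; lra]); lra).
    assert (P2 : 0 < 1 + Ss / s) by (assert (0 <= Ss / s) by (unfold Rdiv; apply Rmult_le_pos; [lra| left; apply Rinv_0_lt_compat; lra]); lra).
    pose proof (ln_tangent _ _ P1 P2) as T.
    assert (Q : (1 + S / s) / (1 + Ss / s) - 1 = (S - Ss) / (s + Ss)) by (field; lra).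
    assert (Q2 : (S - Ss) / (s + Ss) - l * (S - Ss) = (S - Ss) * (1 - l * (s + Ss)) / (s + Ss))
      by (field; lra).
    assert (Q3 : (S - Ss) * (1 - l * (s + Ss)) / (s + Ss) <= 0).
    { unfold Rdiv. assert (0 < / (s + Ss)) by (apply Rinv_0_lt_compat; lra).
      nra. } lra. }
  destruct (Rle_dec (l * (s + H)) 1) as [C1|C1].
  { exists H. split; [lra|]. intros S HS. apply key; try lra. nra. }
  destruct (Rle_dec 1 (l * s)) as [C2|C2].
  { exists 0. split; [lra|]. intros S HS. apply key; try lra. nra. }
  assert (lp : 0 < l) by nra.
  assert (E : l * (s + (1 / l - s)) = 1) by (field; lra).
  assert (B1 : 0 <= 1 / l - s).
  { apply Rmult_le_reg_l with l; [lra|]. replace (l * (1 / l - s)) with (1 - l * s) by (field; lra). lra. }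
  assert (B2 : 1 / l - s <= H).
  { apply Rmult_le_reg_l with l; [lra|]. replace (l * (1 / l - s)) with (1 - l * s) by (field; lra). lra. }
  exists (1 / l - s). split; [lra|]. intros S HS. apply key; try lra. rewrite E. lra.
Qed.
End G.

Theorem lemma5p1 (M : nat) (h : nat -> R) (P sigma2 lambda : R)
  (HM : (1 <= M)%nat)
  (Hh : forall m, (m < M)%nat -> 0 <= h m)
  (HP : 0 < P) (Hs : 0 < sigma2) (Hl : 0 <= lambda) :
  exists v : R,
    is_max_vec M h P sigma2 lambda v /\ is_max_scal M h P sigma2 lambda v.
Proof.
  set (H := sumM M (fun m => h m * P)).
  assert (HH : 0 <= H).
  { apply (sumM_bounds M _ (fun m => h m * P)). intros m Hm. pose proof (Hh m Hm). nra. }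
  assert (Evec : forall alpha, obj_vec M h P sigma2 lambda alpha
     = g H sigma2 lambda (sumM M (fun m => alpha m * h m * P))).
  { intros alpha. unfold obj_vec, g. f_equal.
    rewrite (sumM_ext M _ (fun m => lambda * (h m * P) + (- lambda) * (alpha m * h m * P)))
      by (intros; ring).
    rewrite sumM_lin. unfold H. ring. }
  assert (Esc : forall a, obj_scal M h P sigma2 lambda a = g H sigma2 lambda (a * H)).
  { intros a. unfold obj_scal, g. fold H.
    rewrite (sumM_ext M _ (fun m => lambda * (h m * P) + 0 * (h m * P))) by (intros; ring).
    rewrite sumM_lin. fold H. ring. }
  assert (Sb : forall alpha, (forall m, (m < M)%nat -> 0 <= alpha m <= 1) ->
     0 <= sumM M (fun m => alpha m * h m * P) <= H).
  { intros alpha Ha. apply (sumM_bounds M _ (fun m => h m * P)). intros m Hm. pose proof (Hh m Hm). destruct (Ha m Hm) as [a0 a1]. assert (0 <= h m * P) by (apply Rmult_le_pos; lra). rewrite Rmult_assoc. split; [apply Rmult_le_pos; lra|]. rewrite <- (Rmult_1_l (h m * P)) at 2. apply Rmult_le_compat_r; lra. }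
  destruct (g_max H sigma2 lambda HH Hs) as [Ss [HSs Hmax]].
  destruct (Req_dec H 0) as [H0|H0].
  - exists (g H sigma2 lambda 0). assert (Ss = 0) by lra. subst Ss.
    split; split.
    + exists (fun _ => 0). split; [intros; lra|]. rewrite Evec. f_equal.
      rewrite (sumM_ext M _ (fun m => 0 * (h m * P) + 0 * (h m * P))) by (intros; ring).
      rewrite sumM_lin. ring.
    + intros alpha Ha. rewrite Evec. apply Hmax. apply Sb. assumption.
    + exists 0. split; [lra|]. rewrite Esc, Rmult_0_l. reflexivity.
    + intros a Ha. rewrite Esc. apply Hmax. rewrite H0. lra.
  - set (c := Ss / H).
    assert (Hc : 0 <= c <= 1).
    { unfold c. split.
      - unfold Rdiv. apply Rmult_le_pos; [lra| left; apply Rinv_0_lt_compat; lra].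
      - apply Rmult_le_reg_l with H; [lra|]. replace (H * (Ss / H)) with Ss by (field; lra). lra. }
    assert (cH : c * H = Ss) by (unfold c; field; lra).
    exists (g H sigma2 lambda Ss). split; split.
    + exists (fun _ => c). split; [intros; lra|]. rewrite Evec. f_equal.
      rewrite (sumM_ext M _ (fun m => c * (h m * P) + 0 * (h m * P))) by (intros; ring).
      rewrite sumM_lin. fold H. lra.
    + intros alpha Ha. rewrite Evec. apply Hmax. apply Sb. assumption.
    + exists c. split; [lra|]. rewrite Esc. rewrite cH. reflexivity.
    + intros a Ha. rewrite Esc. apply Hmax. split; nra.
Qed.
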